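(* Let $P$ be a poset, equipped with its order topology, such that (i) every element of $P$ has finite height, and (ii) every down-equivalence class of $P$ is countable. Then any two elements of $\mathrm{Homeo}(P)$ are isotopic if and only if they are equal.
   Context: The order topology on a poset $P$ declares the lower sets open, where $S\subseteq P$ is a lower set if $a\le b$ and $b\in S$ imply $a\in S$; continuous maps are exactly order-preserving maps. A chain of length $n$ is a sequence of distinct points $a_0<a_1<\cdots<a_n$ in $P$. The height of $a\in P$ is $\mathrm{Ht}(a)=\sup\{n\in\mathbb{N}\cup\{\infty\}:\exists\, a_0<\cdots<a_n=a\}$. Two elements $a,a'\in P$ are down-equivalent if for all $b\in P$, $b<a$ iff $b<a'$; this is an equivalence relation. $\mathrm{Homeo}(P)$ is the group of homeomorphisms of $P$; two homeomorphisms $f,g$ are isotopic if there is a continuous $H:P\times[0,1]\to P$ with each $H_t=H(\cdot,t)$ a homeomorphism, $H_0=f$, $H_1=g$. *)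

(* Defs.v *)
From HB Require Import structures.
From mathcomp Require Import all_boot all_order all_algebra.
From mathcomp Require Import all_classical all_reals all_analysis.
Set Implicit Arguments. Unset Strict Implicit. Unset Printing Implicit Defensive.
Import Order.TTheory GRing.Theory Num.Theory.
Local Open Scope classical_set_scope.

Definition lower_set (d : Order.disp_t) (T : porderType d) (S : set T) : Prop :=
  forall a b : T, (a <= b)%O -> S b -> S a.

(* Alias of a poset carrying its order topology: the open sets are exactly
   the lower sets. *)
Definition ordtop (d : Order.disp_t) (T : porderType d) : Type := T.

Section OrdTop.
Context (d : Order.disp_t) (T : porderType d).

HB.instance Definition _ := Choice.on (ordtop T).
HB.instance Definition _ := Order.POrder.on (ordtop T).

Lemma lower_setT : lower_set [set: T].
Proof. by []. Qed.

Lemma lower_setI : setI_closed (@lower_set d T).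
Proof.
move=> A B hA hB a b ab [Ab Bb]; split; [exact: hA ab Ab | exact: hB ab Bb].
Qed.

Lemma lower_set_bigU (I : Type) (f : I -> set T) :
  (forall i, lower_set (f i)) -> lower_set (\bigcup_i f i).
Proof. by move=> hf a b ab [i _ fib]; exists i => //; exact: hf ab fib. Qed.

HB.instance Definition _ := isOpenTopological.Build (ordtop T)
  lower_setT lower_setI lower_set_bigU.
End OrdTop.

Definition is_homeo (X : topologicalType) (f : X -> X) : Prop :=
  exists g : X -> X, [/\ cancel f g, cancel g f, continuous f & continuous g].

Definition isotopic (R : realType) (X : topologicalType) (f g : X -> X) : Prop :=
  exists H : X * R -> X,
    [/\ {within [set: X] `*` `[0%R, 1%R], continuous H},
        (forall t : R, `[0%R, 1%R] t -> is_homeo (fun x => H (x, t))),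
        (forall x, H (x, 0%R) = f x) &
        (forall x, H (x, 1%R) = g x)].

Definition chain_to (d : Order.disp_t) (T : porderType d) (n : nat)
    (c : nat -> T) (a : T) : Prop :=
  (forall i, (i < n)%N -> (c i < c i.+1)%O) /\ c n = a.

Definition finite_height (d : Order.disp_t) (T : porderType d) (a : T) : Prop :=
  exists N : nat, forall (n : nat) (c : nat -> T), chain_to n c a -> (n <= N)%N.

Definition down_equiv (d : Order.disp_t) (T : porderType d) (a a' : T) : Prop :=
  forall b : T, (b < a)%O <-> (b < a')%O.

Definition down_class (d : Order.disp_t) (T : porderType d) (a : T) : set T :=
  [set a' | down_equiv a a'].

(* Main.v *)
Require Import Defs.
From HB Require Import structures.
From mathcomp Require Import all_boot all_order all_algebra.
From mathcomp Require Import all_classical all_reals all_analysis.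
Import Order.TTheory GRing.Theory Num.Theory.
Set Implicit Arguments. Unset Strict Implicit.
Import numFieldNormedType.Exports.
Local Open Scope classical_set_scope.

Section Aux.
Context (d : Order.disp_t) (T : porderType d).

Lemma cont_mono (h : ordtop T -> ordtop T) : continuous h ->
  forall a b : ordtop T, (a <= b)%O -> (h a <= h b)%O.
Proof.
move=> hc a b ab.
have hU : nbhs (h b) [set y : ordtop T | (y <= h b)%O].
  apply: open_nbhs_nbhs; split => /=; last exact: lexx.
  move=> u v uv /= vh; exact: le_trans uv vh.
have := hc b _ hU; rewrite nbhsE => -[W [oW Wb] WU].
exact: WU (oW a b ab Wb).
Qed.

Lemma key (hfin : forall a : T, finite_height a)
  (h1 h2 : ordtop T -> ordtop T) (x : ordtop T) :
  is_homeo h1 -> is_homeo h2 -> (h1 x <= h2 x)%O -> h1 x = h2 x.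
Proof.
move=> [g1 [c1 c1' m1 n1]] [g2 [c2 c2' m2 n2]] le12.
pose k := fun y => g2 (h1 y).
have kmono : forall a b : ordtop T, (a < b)%O -> (k a < k b)%O.
  move=> a b; rewrite !lt_neqAle => /andP[nab lab]; apply/andP; split.
    apply: contra nab => /eqP kab; apply/eqP.
    by rewrite -(c1 a) -(c1 b) -(c2' (h1 a)) -(c2' (h1 b)) -/(k a) -/(k b) kab.
  rewrite /k; exact: (cont_mono n2 (cont_mono m1 lab)).
have kx : (k x <= x)%O by rewrite /k -{2}(c2 x); exact: (cont_mono n2 le12).
case: (eqVneq (k x) x) => [ekx|nkx].
  by rewrite -(c2' (h1 x)) -/(k x) ekx.
have kxl : (k x < x)%O by rewrite lt_neqAle nkx kx.
have itl : forall m, (iter m.+1 k x < iter m k x)%O.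
  by elim=> [//|m IH] /=; apply: kmono; exact: IH.
have [N HN] := hfin x.
suff: (N.+1 <= N)%N by rewrite ltnn.
apply: (HN _ (fun i => iter (N.+1 - i) k x)).
split; last by rewrite subnn.
move=> i iN; have -> : (N.+1 - i = (N.+1 - i.+1).+1)%N by rewrite subnSK.
exact: itl.
Qed.
End Aux.

Theorem theorem3p3 (R : realType) (d : Order.disp_t) (T : porderType d)
  (hfin : forall a : T, finite_height a)
  (hcount : forall a : T, countable (down_class a))
  (f g : ordtop T -> ordtop T) :
  is_homeo f -> is_homeo g -> (isotopic R f g <-> f = g).
Proof.
move=> hf hg; split; last first.
  move=> <-; exists (fun p => f p.1); split => //.
  apply: continuous_subspaceT => p.
  have [f' [_ _ fc _]] := hf.
  apply: continuous_comp; [exact: cvg_fst | exact: fc].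
move=> [H [Hc Hh H0 H1]]; apply: funext => x.
pose phi t := H (x, t).
have loc : forall t : R, `[0%R, 1%R] t ->
    nbhs t [set t' | `[0%R, 1%R] t' -> phi t' = phi t].
  move=> t t01.
  have At : ([set: ordtop T] `*` `[0%R, 1%R]) (x, t) by split.
  have hD : nbhs (H (x, t)) [set y : ordtop T | (y <= H (x, t))%O].
    apply: open_nbhs_nbhs; split => /=; last exact: lexx.
    move=> u v uv /= vh; exact: le_trans uv vh.
  have : nbhs_subspace (A:= [set: ordtop T] `*` (`[0%R, 1%R] : set R)) (x, t)
      (H @^-1` [set y : ordtop T | (y <= H (x, t))%O]) by exact: Hc (x, t) _ hD.
  rewrite -nbhs_subspace_in //.
  move=> [[Q Rr] [Qx Rt] sQR].
  apply: filterS Rt => t' Rt' t'01.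
  have le : (phi t' <= phi t)%O.
    apply: (sQR (x, t')).
      split; [exact: nbhs_singleton Qx | exact: Rt'].
    by split.
  exact: (key hfin (Hh t' t'01) (Hh t t01) le).
pose I01 : set R := `[0%R, 1%R].
have i01 : forall t : R, I01 t -> (0 <= t <= 1)%R.
  by move=> t; rewrite /I01 /= in_itv.
have i01' : forall t : R, (0 <= t <= 1)%R -> I01 t.
  by move=> t; rewrite /I01 /= in_itv.
pose S1 := [set s : R | I01 s -> phi s = phi 0%R].
pose S2 := [set s : R | I01 s -> phi s != phi 0%R].
pose B := [set s : R | I01 s /\ phi s = phi 0%R].
have BE : B = I01.
  rewrite /I01; apply: (@segment_connected R 0%R 1%R).
  - exists 0%R; split => //; by apply: i01'; rewrite lexx ler01.
  - exists (@interior _ S1); first exact: open_interior.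
    apply/seteqP; split.
      move=> t [t01 e]; split => //.
      apply: filterS (loc t t01) => t' h t'01; rewrite h // e.
    move=> t [t01 /nbhs_singleton h]; split => //; exact: h.
  - exists (~` @interior _ S2); first exact/open_closedC/open_interior.
    apply/seteqP; split.
      move=> t [t01 e]; split => // /nbhs_singleton h.
      by move: (h t01); rewrite e eqxx.
    move=> t [t01 nS]; split => //.
    case: (eqVneq (phi t) (phi 0%R)) => // ne; exfalso; apply: nS.
    apply: filterS (loc t t01) => t' h t'01; rewrite h //.
have : B 1%R by rewrite BE; by apply: i01'; rewrite lexx ler01.
by move=> [_]; rewrite /phi H0 H1 => ->.
Qed.
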